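(* Let $\eta(n)\in\mathbb N^N$ denote random allocation after $n$ steps ($\eta_x(n)$ = number of the first $n$ i.i.d. uniform draws from $\{1,\dots,N\}$ equal to $x$). Let $T_N=\lfloor N/\log N\rfloor$ and $H_N=\log N/\log\log N$. For every $\alpha\in[\tfrac12,1)$ and every $\delta\in(0,(1-\alpha)/2)$, with probability at least $1-\varepsilon_N$ where $\sum_N\varepsilon_N<\infty$ (in the paper's words: almost surely, for $N$ large enough), $$\big|\{x\in\{1,\dots,N\}:\ \eta_x(T_N)>\delta H_N\}\big|\ge N^{\alpha}.$$ *)

(* Defs.v *)
From mathcomp Require Import all_boot.
From Stdlib Require Import Reals.

Set Implicit Arguments.
Unset Strict Implicit.
Unset Printing Implicit Defensive.

Definition Rltb (a b : R) : bool := if Rlt_dec a b then true else false.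
Definition Rleb (a b : R) : bool := if Rle_dec a b then true else false.

Definition unifP (T : finType) (A : {pred T}) : R :=
  INR #|A| / INR #|T|.

Definition TN (N : nat) : nat := Z.to_nat (Int_part (INR N / ln (INR N))).

Definition HN (N : nat) : R := ln (INR N) / ln (ln (INR N)).

(* A sample of n i.i.d. uniform draws from {1..N} (encoded as 'I_N = {0..N-1})
   is w : {ffun 'I_n -> 'I_N}; eta_x(n) = number of draws equal to x. *)
Definition eta (N n : nat) (w : {ffun 'I_n -> 'I_N}) (x : 'I_N) : nat :=
  #|[set i : 'I_n | w i == x]|.

Definition good_event (N : nat) (alpha delta : R)
  (w : {ffun 'I_(TN N) -> 'I_N}) : bool :=
  Rleb (Rpower (INR N) alpha)
       (INR #|[set x : 'I_N | Rltb (delta * HN N) (INR (eta w x))]|).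

(* Main.v *)
Require Import Defs.
From HB Require Import structures.
From mathcomp Require Import all_boot.
From Stdlib Require Import Reals.
From Stdlib Require Import Lra Lia ZArith.
Import ssrnat.
Set Implicit Arguments.
Unset Strict Implicit.
Unset Printing Implicit Defensive.

Lemma Rplus_assoc' : associative Rplus. Proof. by move=> *; rewrite Rplus_assoc. Qed.
HB.instance Definition _ := Monoid.isComLaw.Build R 0%R Rplus Rplus_assoc' Rplus_comm Rplus_0_l.
HB.instance Definition _ := Monoid.isMulLaw.Build R 0%R Rmult Rmult_0_l Rmult_0_r.
HB.instance Definition _ := Monoid.isAddLaw.Build R Rmult Rplus Rmult_plus_distr_r Rmult_plus_distr_l.


Section Dec.
Variable A : finType.

Definition cons_ff n (a : A) (v : {ffun 'I_n -> A}) : {ffun 'I_n.+1 -> A} :=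
  [ffun i => match unlift ord0 i with Some j => v j | None => a end].
Definition tl_ff n (w : {ffun 'I_n.+1 -> A}) : {ffun 'I_n -> A} :=
  [ffun j => w (lift ord0 j)].

Lemma cons_ff0 n a (v : {ffun 'I_n -> A}) : cons_ff a v ord0 = a.
Proof. by rewrite /cons_ff ffunE unlift_none. Qed.
Lemma cons_ffS n a (v : {ffun 'I_n -> A}) j : cons_ff a v (lift ord0 j) = v j.
Proof. by rewrite /cons_ff ffunE liftK. Qed.
Lemma cons_tl n (w : {ffun 'I_n.+1 -> A}) : cons_ff (w ord0) (tl_ff w) = w.
Proof.
apply/ffunP=> i; rewrite /cons_ff ffunE; case: unliftP => [j ->|->] //.
by rewrite ffunE.
Qed.

Lemma big_cons_ff (Rt : Type) (idx : Rt) (op : Monoid.com_law idx) n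
  (F : {ffun 'I_n.+1 -> A} -> Rt) :
  \big[op/idx]_(w : {ffun 'I_n.+1 -> A}) F w = \big[op/idx]_(a : A) \big[op/idx]_(v : {ffun 'I_n -> A}) F (cons_ff a v).
Proof.
rewrite pair_big /=.
rewrite (reindex (fun p : A * {ffun 'I_n -> A} => cons_ff p.1 p.2)) //=.
exists (fun w : {ffun 'I_n.+1 -> A} => (w ord0, tl_ff w)) => [[a v] _|w _] /=.
  congr pair; first by rewrite cons_ff0.
  by apply/ffunP=> j; rewrite ffunE cons_ffS.
by rewrite cons_tl.
Qed.

End Dec.

Open Scope R_scope.

Definition rsum (X : finType) (F : X -> R) := \big[Rplus/0]_(x : X) F x.

Lemma rsum_le (X : finType) (F G : X -> R) : (forall x, F x <= G x) -> rsum F <= rsum G.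
Proof. move=> H; rewrite /rsum; elim/big_rec2: _ => //; first lra. move=> x y1 y2 _ Hy; have := H x; lra. Qed.

Lemma rsum_ge0 (X : finType) (F : X -> R) : (forall x, 0 <= F x) -> 0 <= rsum F.
Proof. move=> H; rewrite /rsum; elim/big_rec: _ => //; first lra. move=> x y _ Hy; have := H x; lra. Qed.

Lemma rsumD (X : finType) (F G : X -> R) : rsum (fun x => F x + G x) = rsum F + rsum G.
Proof. by rewrite /rsum big_split. Qed.

Lemma rsumZ (X : finType) c (F : X -> R) : rsum (fun x => c * F x) = c * rsum F.
Proof. by rewrite /rsum big_distrr. Qed.

Lemma rsumN (X : finType) (F : X -> R) : rsum (fun x => - F x) = - rsum F.
Proof. have -> : - rsum F = (-1) * rsum F by ring.
rewrite -rsumZ; by apply: eq_bigr => x _; ring. Qed.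

Lemma rsumB (X : finType) (F G : X -> R) : rsum (fun x => F x - G x) = rsum F - rsum G.
Proof. by rewrite /Rminus -rsumN -rsumD. Qed.

Lemma rsum_const (X : finType) c : rsum (fun _ : X => c) = INR #|X| * c.
Proof.
rewrite /rsum cardE /enum_mem; rewrite -big_filter. elim: (filter _ _) => [|a l IH].
  by rewrite big_nil /=; ring.
rewrite big_cons IH; change (size (a :: l)) with (size l).+1; rewrite S_INR; ring.
Qed.

Lemma rsum_ext (X : finType) (F G : X -> R) : (forall x, F x = G x) -> rsum F = rsum G.
Proof. by move=> H; apply: eq_bigr => x _. Qed.

Lemma rsum_abs (X : finType) (F : X -> R) : Rabs (rsum F) <= rsum (fun x => Rabs (F x)).
Proof. rewrite /rsum; elim/big_rec2: _ => [|x y1 y2 _ Hy]. rewrite Rabs_R0; lra.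
have := Rabs_triang (F x) y2; lra. Qed.

Lemma exp_le x y : x <= y -> exp x <= exp y.
Proof. case=> [H|->]; [left; exact: exp_increasing | right; reflexivity]. Qed.
Lemma ln_le x y : 0 < x -> x <= y -> ln x <= ln y.
Proof. move=> Hx; case=> [H|->]; [left; apply: ln_increasing | right] => //. Qed.

Lemma Rabs_le_inv x b : Rabs x <= b -> - b <= x <= b.
Proof. by move=> H; split_Rabs; lra. Qed.

Lemma exp_le_quad y : y <= /2 -> exp y <= 1 + y + 2 * y ^ 2.
Proof.
move=> Hy. have H1 := exp_ineq1_le (- y).
have Hp : 0 < exp (- y) by apply: exp_pos.
have He : exp y = / exp (- y) by rewrite exp_Ropp Rinv_inv.
rewrite He. apply: (Rmult_le_reg_l (exp (-y))) => //.
rewrite Rinv_r; last lra.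
have : 1 <= (1 - y) * (1 + y + 2 * y ^ 2) by nra.
move=> H2. apply: Rle_trans H2 _. apply: Rmult_le_compat_r; nra.
Qed.

Section Conc.
Variable A : finType.
Hypothesis Apos : (0 < #|A|)%N.
Let K := INR #|A|.
Lemma Kpos : 0 < K. Proof. rewrite /K; apply: lt_0_INR; apply/ltP. done. Qed.

Definition BD n (f : {ffun 'I_n -> A} -> R) :=
  forall (w w' : {ffun 'I_n -> A}) (i : 'I_n), (forall j, j != i -> w j = w' j) -> Rabs (f w - f w') <= 1.

Lemma one_dim (X : A -> R) s : rsum X = 0 -> (forall a, Rabs (X a) <= 1) -> 0 <= s <= /2 ->
  rsum (fun a => exp (s * X a)) <= K * (1 + 2 * s ^ 2).
Proof.
move=> H0 H1 Hs.
apply: Rle_trans (rsum_le (G := fun a => 1 + s * X a + 2 * s ^ 2) _) _.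
  move=> a; have := H1 a => /Rabs_le_inv ha.
  apply: Rle_trans (exp_le_quad _) _. nra.
  have h2 : X a ^ 2 <= 1 by nra.
  have -> : (s * X a) ^ 2 = s ^ 2 * X a ^ 2 by ring.
  have : s ^ 2 * X a ^ 2 <= s ^ 2 * 1 by apply: Rmult_le_compat_l; nra.
  lra.
rewrite !rsumD rsumZ H0 !rsum_const -/K. lra.
Qed.

Lemma avg_diff (F : A -> R) : (forall a b, Rabs (F a - F b) <= 1) ->
  forall a, Rabs (rsum F / K - F a) <= 1.
Proof.
have Kp := Kpos.
move=> H a.
have -> : rsum F / K - F a = rsum (fun b => F b - F a) / K.
  by rewrite rsumB rsum_const -/K; field; lra.
rewrite /Rdiv Rabs_mult Rabs_inv (Rabs_pos_eq K); last lra.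
suff H' : Rabs (rsum (fun b => F b - F a)) <= K.
  apply: Rle_trans (Rmult_le_compat_r (/K) _ _ _ H') _.
    by apply: Rlt_le; apply: Rinv_0_lt_compat.
  by right; field; lra.
apply: Rle_trans (rsum_abs _) _.
rewrite -[K]Rmult_1_r -rsum_const. by apply: rsum_le => b.
Qed.

Definition avg n (f : {ffun 'I_n -> A} -> R) := rsum f / K ^ n.

Lemma rsum_xchg (X Y : finType) (F : X -> Y -> R) :
  rsum (fun x => rsum (fun y => F x y)) = rsum (fun y => rsum (fun x => F x y)).
Proof. by rewrite /rsum exchange_big. Qed.

Lemma rsum_cons n (F : {ffun 'I_n.+1 -> A} -> R) :
  rsum F = rsum (fun a => rsum (fun v => F (cons_ff a v))).
Proof. by rewrite /rsum big_cons_ff. Qed.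

Lemma cons_diff n a b (v v' : {ffun 'I_n -> A}) (i : 'I_n.+1) :
  (forall j, lift ord0 j != i -> v j = v' j) -> (i != ord0 -> a = b) ->
  forall j, j != i -> cons_ff a v j = cons_ff b v' j.
Proof.
move=> Hv Hab j; case: (unliftP ord0 j) => [k ->|->] Hj.
  by rewrite !cons_ffS; apply: Hv.
by rewrite !cons_ff0; apply: Hab; rewrite eq_sym.
Qed.

Lemma conc n (f : {ffun 'I_n -> A} -> R) s : BD f -> 0 <= s <= /2 ->
  rsum (fun w => exp (s * (avg f - f w))) <= K ^ n * (1 + 2 * s ^ 2) ^ n.
Proof.
have Kp := Kpos.
elim: n f => [|n IH] f Hf Hs.
  have [a _] : exists a, a \in A by apply/card_gt0P.
  set x0 : {ffun 'I_0 -> A} := [ffun _ => a].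
  have Hall : forall w : {ffun 'I_0 -> A}, w = x0 by move=> w; apply/ffunP => -[].
  have HS : forall F : {ffun 'I_0 -> A} -> R, rsum F = F x0.
    move=> F; rewrite (rsum_ext (G := fun _ => F x0)); last by move=> w; rewrite (Hall w).
    by rewrite rsum_const card_ffun card_ord expn0 /=; ring.
  rewrite HS /avg HS /= Rdiv_1_r Rminus_diag Rmult_0_r exp_0; lra.
set g := fun v : {ffun 'I_n -> A} => rsum (fun a => f (cons_ff a v)) / K.
have Havg : avg f = avg g.
  rewrite /avg /g rsum_cons rsum_xchg.
  have -> : rsum (fun v => rsum (fun a => f (cons_ff a v)) / K) =
     /K * rsum (fun v => rsum (fun a => f (cons_ff a v))).
    by rewrite -rsumZ; apply: rsum_ext => v; rewrite /Rdiv Rmult_comm.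
  have Kn : K ^ n <> 0 by apply: pow_nonzero; lra.
  simpl pow; field; split; lra.
have Hg : BD g.
  move=> v v' j Hj. rewrite /g -Rdiv_minus_distr.
  rewrite -rsumB /Rdiv Rabs_mult Rabs_inv (Rabs_pos_eq K); last lra.
  suff H : Rabs (rsum (fun a => f (cons_ff a v) - f (cons_ff a v'))) <= K.
    apply: Rle_trans (Rmult_le_compat_r (/K) _ _ _ H) _.
      by apply: Rlt_le; apply: Rinv_0_lt_compat.
    by right; field; lra.
  apply: Rle_trans (rsum_abs _) _.
  rewrite -[K]Rmult_1_r -rsum_const. apply: rsum_le => a.
  apply: (Hf _ _ (lift ord0 j)); apply: cons_diff => //.
have Hs' : 0 <= s * s by nra.
rewrite Havg rsum_cons rsum_xchg.
apply: Rle_trans (rsum_le (G := fun v => exp (s * (avg g - g v)) * (K * (1 + 2 * s ^ 2))) _) _.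
  move=> v.
  rewrite (rsum_ext (G := fun a => exp (s * (avg g - g v)) * exp (s * (g v - f (cons_ff a v))))); last first.
    by move=> a; rewrite -exp_plus; congr exp; ring.
  rewrite rsumZ; apply: Rmult_le_compat_l; first by apply: Rlt_le; apply: exp_pos.
  apply: one_dim => //.
    rewrite rsumB rsum_const /g /= -/K; field; lra.
  move=> a; rewrite /g /=; apply: (avg_diff (F := fun a => f (cons_ff a v))) => b c.
  apply: (Hf _ _ ord0); apply: cons_diff => //.
rewrite (rsum_ext (G := fun v => (K * (1 + 2 * s ^ 2)) * exp (s * (avg g - g v)))); last first.
  by move=> v; rewrite Rmult_comm.
rewrite rsumZ.
have H := IH g Hg Hs.
have Hp : 0 <= K * (1 + 2 * s ^ 2) by nra.
apply: Rle_trans (Rmult_le_compat_l _ _ _ Hp H) _.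
simpl pow; right; ring.
Qed.
End Conc.


Lemma INR_sum (X : finType) (F : X -> nat) : INR (\sum_(x : X) F x) = rsum (fun x => INR (F x)).
Proof. rewrite /rsum; apply: (big_morph INR) => //. move=> a b; exact: plus_INR. Qed.

Lemma card_sum (T : finType) (P : pred T) : #|[set x | P x]| = (\sum_(x : T) (P x : nat))%N.
Proof. rewrite -sum1_card big_mkcond; apply: eq_bigr => x _; rewrite inE; by case: (P x). Qed.

Lemma card_rsum (T : finType) (P : pred T) : INR #|[set x | P x]| = rsum (fun x => if P x then 1 else 0).
Proof. rewrite card_sum INR_sum; apply: rsum_ext => x; by case: (P x). Qed.

Lemma markov (A : finType) (Apos : (0 < #|A|)%N) n (f : {ffun 'I_n -> A} -> R) s t :
  BD f -> 0 <= s <= /2 ->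
  INR #|[set w | Rleb (f w) (avg f - t)]| * exp (s * t) <= INR #|A| ^ n * (1 + 2 * s ^ 2) ^ n.
Proof.
move=> Hf Hs; apply: Rle_trans (conc Apos Hf Hs).
rewrite card_rsum Rmult_comm -rsumZ; apply: rsum_le => w.
rewrite /Rleb; case: Rle_dec => H.
  rewrite Rmult_1_r; apply: exp_le. nra.
rewrite Rmult_0_r; apply: Rlt_le; apply: exp_pos.
Qed.

Section Eta.
Variable N : nat.
Local Open Scope nat_scope.

Lemma eta_cons n (a : 'I_N) (v : {ffun 'I_n -> 'I_N}) (x : 'I_N) :
  Defs.eta (cons_ff a v) x = ((a == x) + Defs.eta v x)%N.
Proof.
rewrite /Defs.eta !card_sum big_ord_recl cons_ff0; congr addn.
by apply: eq_bigr => i _; rewrite cons_ffS.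
Qed.

Lemma count_eta n x m :
  #|[set w : {ffun 'I_n -> 'I_N} | Defs.eta w x == m]| = ('C(n, m) * N.-1 ^ (n - m))%N.
Proof.
elim: n m => [|n IH] m.
  rewrite card_sum.
  have E0 : forall w : {ffun 'I_0 -> 'I_N}, Defs.eta w x = 0%N.
    by move=> w; rewrite /Defs.eta card_sum big_ord0.
  rewrite (eq_bigr (fun _ => (0 == m : nat))); last by move=> w _; rewrite E0.
  rewrite sum_nat_const card_ffun (card_ord 0) expn0 mul1n muln1.
  by case: m.
rewrite card_sum.
rewrite (big_cons_ff (Monoid.ComLaw.clone _ _ addn _)) /=.
rewrite (bigD1 x) //=.
have E : (\sum_(a < N | a != x) \sum_(v : {ffun 'I_n -> 'I_N}) (Defs.eta (cons_ff a v) x == m : nat))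
   = \sum_(a in predC1 x) #|[set w : {ffun 'I_n -> 'I_N} | Defs.eta w x == m]|.
  apply: eq_big => a; first by rewrite inE.
  move=> Ha; rewrite card_sum; apply: eq_bigr => v _.
  by rewrite eta_cons (negbTE Ha) add0n.
rewrite E sum_nat_const cardC1 card_ord IH; clear E.
have E1 : \sum_(v : {ffun 'I_n -> 'I_N}) (Defs.eta (cons_ff x v) x == m : nat) =
   #|[set w : {ffun 'I_n -> 'I_N} | Defs.eta w x == m.-1]| * (0 < m).
  rewrite card_sum; case: m => [|k] /=.
    by rewrite muln0; apply: big1 => v _; rewrite eta_cons eqxx.
  by rewrite muln1; apply: eq_bigr => v _; rewrite eta_cons eqxx.
rewrite E1 IH; clear E1.
case: m => [|k] /=.
  by rewrite muln0 add0n !bin0 !mul1n !subn0 expnS.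
rewrite muln1 binS mulnDl subSS.
case: (ltnP k n) => Hk.
  rewrite -(subnSK Hk).
  rewrite expnS. set p := (N.-1 ^ (n - k.+1))%N. set q := N.-1.
  by rewrite addnC mulnCA.
by rewrite (@bin_small n k.+1) ?ltnS // !mul0n muln0 addn0 add0n.
Qed.
End Eta.

Definition cntf N n c (w : {ffun 'I_n -> 'I_N}) : R :=
  INR #|[set x : 'I_N | Rltb c (INR (Defs.eta w x))]|.

Lemma Rltb_mono c a b : Rltb c a -> a <= b -> Rltb c b.
Proof. rewrite /Rltb; case: Rlt_dec => // H1 _ H2; case: Rlt_dec => // H3; exfalso; apply: H3; lra. Qed.

Lemma cnt_sub N n c (w w' : {ffun 'I_n -> 'I_N}) i :
  (forall j, j != i -> w j = w' j) ->
  (#|[set x : 'I_N | Rltb c (INR (Defs.eta w' x))]| <= #|[set x : 'I_N | Rltb c (INR (Defs.eta w x))]| + 1)%N.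
Proof.
move=> H.
apply: (leq_trans (n := #|w' i |: [set x : 'I_N | Rltb c (INR (Defs.eta w x))]|)).
  apply: subset_leq_card; apply/subsetP => x; rewrite in_setU1 !inE.
  case: eqP => //= Hx Hc; apply: (Rltb_mono Hc); apply: le_INR; apply/leP.
  apply: subset_leq_card; apply/subsetP => j; rewrite !inE => /eqP Hj.
  case: (eqVneq j i) => [Eji|Nji]; first by subst; case: Hx.
  by rewrite H // Hj.
rewrite cardsU1 addnC leq_add2l; by case: (_ \notin _).
Qed.

Lemma cnt_BD N n c : BD (@cntf N n c).
Proof.
move=> w w' i H.
have H' : forall j, j != i -> w' j = w j by move=> j Hj; rewrite H.
have h1 := cnt_sub c H. have h2 := cnt_sub c H'.
rewrite /cntf. move/leP: h1 => /le_INR; rewrite plus_INR /= => h1.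
move/leP: h2 => /le_INR; rewrite plus_INR /= => h2.
apply: Rabs_le; lra.
Qed.

Lemma mean_lb N n c m : c < INR m ->
  INR N * INR ('C(n, m) * N.-1 ^ (n - m)) <= rsum (@cntf N n c).
Proof.
move=> Hc.
rewrite /cntf.
rewrite (rsum_ext (G := fun w => rsum (fun x : 'I_N => if Rltb c (INR (Defs.eta w x)) then 1 else 0))); last first.
  by move=> w; rewrite card_rsum.
rewrite rsum_xchg.
have -> : INR N * INR ('C(n, m) * N.-1 ^ (n - m)) =
  rsum (fun x : 'I_N => INR ('C(n, m) * N.-1 ^ (n - m))) by rewrite rsum_const card_ord.
apply: rsum_le => x.
rewrite -card_rsum -(count_eta n x m).
apply: le_INR; apply/leP; apply: subset_leq_card; apply/subsetP => w; rewrite !inE => /eqP ->.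
by rewrite /Rltb; case: Rlt_dec.
Qed.

Lemma INR_expn m n : INR (m ^ n)%N = INR m ^ n.
Proof. elim: n => [|n IH] //. by rewrite expnS mult_INR IH. Qed.

Lemma exp_pow x n : exp x ^ n = exp (INR n * x).
Proof.
elim: n => [|n IH]; first by rewrite /= Rmult_0_l exp_0.
by change (exp x ^ n.+1) with (exp x * exp x ^ n); rewrite IH -exp_plus S_INR; congr exp; ring.
Qed.

Lemma final_step N alpha delta s t : (0 < N)%N -> 0 <= s <= /2 ->
  Rpower (INR N) alpha <= avg (@cntf N (TN N) (delta * HN N)) - t ->
  1 - exp (2 * s ^ 2 * INR (TN N) - s * t) <= unifP (fun w : {ffun 'I_(TN N) -> 'I_N} => good_event alpha delta w).
Proof.
move=> Npos Hs Ht.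
have Apos : (0 < #|'I_N|)%N by rewrite card_ord.
have HM := @markov _ Apos (TN N) (@cntf N (TN N) (delta * HN N)) s t (@cnt_BD N (TN N) (delta * HN N)) Hs.
rewrite card_ord in HM.
set G := [set w : {ffun 'I_(TN N) -> 'I_N} | good_event alpha delta w].
move: HM; set B := (X in INR #|X| * _ <= _) => HM.
have HGB : (#|~: G| <= #|B|)%N.
  apply: subset_leq_card; apply/subsetP => w; rewrite !inE /good_event /Rleb.
  case: Rle_dec => //= H1 _; case: Rle_dec => //= H2; exfalso; apply: H2.
  change (INR #|_|) with (cntf (delta * HN N) w) in H1; lra.
have Hcard := cardsC G.
have Hom : #|{ffun 'I_(TN N) -> 'I_N}| = (N ^ TN N)%N by rewrite card_ffun !card_ord.
have HG : #|(fun w : {ffun 'I_(TN N) -> 'I_N} => good_event alpha delta w)| = #|G|.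
  by rewrite cardsE.
rewrite /unifP HG Hom.
have NT : 0 < INR (N ^ TN N) by apply: lt_0_INR; apply/ltP; rewrite expn_gt0 Npos.
have E1 : INR #|G| = INR (N ^ TN N) - INR #|~: G|.
  by rewrite -Hom -Hcard plus_INR; ring.
rewrite E1.
have HB : INR #|~: G| <= INR #|B| by apply: le_INR; apply/leP.
have Hexp : (1 + 2 * s ^ 2) ^ TN N <= exp (2 * s ^ 2) ^ TN N.
  apply: pow_incr; split; [nra | apply: exp_ineq1_le].
rewrite exp_pow in Hexp.
rewrite INR_expn in NT *.
have Hst : 0 < exp (s * t) by apply: exp_pos.
have HB2 : INR #|B| <= INR N ^ TN N * exp (INR (TN N) * (2 * s ^ 2)) / exp (s * t).
  apply: (Rmult_le_reg_r (exp (s * t))) => //.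
  rewrite /Rdiv Rmult_assoc Rinv_l ?Rmult_1_r; last lra.
  apply: Rle_trans HM _. apply: Rmult_le_compat_l => //. apply: pow_le; apply: pos_INR.
have -> : exp (2 * s ^ 2 * INR (TN N) - s * t) = exp (INR (TN N) * (2 * s ^ 2)) / exp (s * t).
  rewrite /Rminus exp_plus exp_Ropp; congr (exp _ * _); ring.
apply: (Rmult_le_reg_r (INR N ^ TN N)) => //.
rewrite /Rdiv (Rmult_assoc _ (/ _)) Rinv_l; last lra.
have : INR N ^ TN N * (exp (INR (TN N) * (2 * s ^ 2)) * / exp (s * t)) >= INR #|B| by move: HB2; rewrite /Rdiv; lra.
nra.
Qed.


Lemma ffact_lb T m : ((T - m) ^ m <= T ^_ m)%N.
Proof.
elim: m => [|m IH] //.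
rewrite ffactnSr expnS mulnC.
apply: leq_mul; last by rewrite subnS leq_pred.
apply: leq_trans IH. case: (m) => [|k] //. by rewrite leq_exp2r // subnS leq_pred.
Qed.

Lemma fact_le_pow m : (m`! <= m ^ m)%N.
Proof.
elim: m => [|m IH] //.
rewrite factS expnS leq_mul2l /=.
apply: leq_trans IH _. case: m => [|m] //. by rewrite leq_exp2r.
Qed.

Lemma bin_lb T m : ((T - m) ^ m <= 'C(T, m) * m ^ m)%N.
Proof.
apply: leq_trans (ffact_lb T m) _.
by rewrite -bin_ffact leq_mul2l fact_le_pow orbT.
Qed.

Lemma bin_lbR T m : (m <= T)%N -> (0 < m)%N ->
  ((INR T - INR m) / INR m) ^ m <= INR 'C(T, m).
Proof.
move=> HmT Hm.
have Hm' : 0 < INR m by apply: lt_0_INR; apply/ltP.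
have H := bin_lb T m. move/leP: H => /le_INR. rewrite mult_INR !INR_expn minus_INR; last by apply/leP.
move=> H.
have Hp : 0 < INR m ^ m by apply: pow_lt.
rewrite /Rdiv Rpow_mult_distr pow_inv.
apply: (Rmult_le_reg_r (INR m ^ m)) => //.
rewrite Rmult_assoc Rinv_l; lra.
Qed.

Lemma bernoulli K k : 1 <= K -> K ^ k * (1 - INR k / K) <= (K - 1) ^ k.
Proof.
move=> HK. elim: k => [|k IH]. simpl; lra.
rewrite S_INR /=.
have h1 : 0 <= K - 1 by lra.
have h2 : (K - 1) * (K ^ k * (1 - INR k / K)) <= (K - 1) * (K - 1) ^ k by apply: Rmult_le_compat_l.
apply: Rle_trans h2.
have Hk : 0 <= K ^ k by apply: pow_le; lra.
have Hi : 0 <= INR k by apply: pos_INR.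
have -> : (K - 1) * (K ^ k * (1 - INR k / K)) = K * K ^ k * (1 - (INR k + 1) / K) + K ^ k * INR k / K.
  field; lra.
have : 0 <= K ^ k * INR k / K.
  apply: Rmult_le_pos; [nra | apply: Rlt_le; apply: Rinv_0_lt_compat; lra].
lra.
Qed.

Lemma exp_ge_sq x : 0 <= x -> x ^ 2 / 4 <= exp x.
Proof.
move=> Hx.
have -> : exp x = exp (x / 2) * exp (x / 2) by rewrite -exp_plus; congr exp; field.
have := exp_ineq1_le (x / 2). nra.
Qed.

Lemma ln_small c : 0 < c -> exists U, forall u, U <= u -> ln u <= c * u.
Proof.
move=> Hc. exists (Rmax 1 (4 / c ^ 2)) => u Hu.
have Hu1 : 1 <= u by apply: Rle_trans (Rmax_l _ _) Hu.
have Hu2 : 4 / c ^ 2 <= u by apply: Rle_trans (Rmax_r _ _) Hu.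
rewrite -(ln_exp (c * u)).
apply: ln_le; first lra.
apply: Rle_trans (exp_ge_sq _) ; last nra.
have Hc2 : 0 < c ^ 2 by nra.
have : 4 <= c ^ 2 * u.
  have := Rmult_le_compat_l (c ^ 2) _ _ (Rlt_le _ _ Hc2) Hu2.
  have -> : c ^ 2 * (4 / c ^ 2) = 4 by field; lra.
  done.
nra.
Qed.

Lemma IP_nat r : 0 <= r -> r - 1 < INR (Z.to_nat (Int_part r)) <= r.
Proof.
move=> Hr. have [h1 h2] := base_Int_part r.
have Hz : (0 <= Int_part r)%Z.
  have : -1 < IZR (Int_part r) by lra.
  move/lt_IZR. lia.
rewrite INR_IZR_INZ Z2Nat.id //. lra.
Qed.

Lemma INR_pred N : (0 < N)%N -> INR N.-1 = INR N - 1.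
Proof. case: N => [|n] // _. rewrite S_INR /=; ring. Qed.

Lemma Rmax_inv a b u : Rmax a b <= u -> a <= u /\ b <= u.
Proof. move=> H; split; [apply: Rle_trans (Rmax_l _ _) H | apply: Rle_trans (Rmax_r _ _) H]. Qed.

Lemma ln_ge V u : exp V <= u -> V <= ln u.
Proof. move=> H. rewrite -(ln_exp V). apply: ln_le => //. apply: exp_pos. Qed.

Lemma exp_ge_of_ln x y : 0 < y -> ln y <= x -> y <= exp x.
Proof. move=> Hy H. rewrite -(exp_ln y) //. by apply: exp_le. Qed.

Lemma analytic alpha delta : / 2 <= alpha < 1 -> 0 < delta < (1 - alpha) / 2 ->
  exists U, 0 < U /\ forall N : nat, U <= ln (INR N) -> (0 < N)%N /\ exists m s t,
  delta * HN N < INR m /\ 0 <= s <= / 2 /\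
  Rpower (INR N) alpha <= INR N * INR ('C(TN N, m) * N.-1 ^ (TN N - m)) / INR (N ^ TN N) - t /\
  exp (2 * s ^ 2 * INR (TN N) - s * t) <= / ((INR N + 1) * (INR N + 2)).
Proof.
move=> Ha Hd.
set g := (1 - 2 * delta - alpha) / 2.
have Hg : 0 < g by rewrite /g; lra.
set b := alpha + g.
set k := 2 * b - 1.
have Hk : 0 < k by rewrite /k /b; lra.
have Hb1 : 0 < 1 - b by rewrite /b /g; lra.
have [U1 HU1] := ln_small (c := g / 6) ltac:(lra).
have [U2 HU2] := ln_small (c := / 4) ltac:(lra).
have [U3 HU3] := ln_small Hb1.
set V0 := Rmax 1 (3 * delta * ln 2 / g).
set U := Rmax (exp V0) (Rmax U1 (Rmax U2 (Rmax U3 (Rmax 2 (Rmax (6 * ln 2 / g)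
   (Rmax (2 * ln 4) (Rmax (ln 2 / g) (ln 128 / k)))))))).
exists U. split.
  apply: Rlt_le_trans (Rmax_l _ _). apply: exp_pos.
move=> N Hu.
set K := INR N. set u := ln K. rewrite -/K -/u in Hu.
move: Hu => /Rmax_inv [hV /Rmax_inv [h1 /Rmax_inv [h2 /Rmax_inv [h3 /Rmax_inv [h4
  /Rmax_inv [h5 /Rmax_inv [h6 /Rmax_inv [h7 h8]]]]]]]].
have Kpos : 0 < K.
  case: (Rlt_dec 0 K) => // H; exfalso.
  have : u = 0 by rewrite /u /ln; case: Rlt_dec.
  lra.
have Npos : (0 < N)%N by move: Kpos; rewrite /K; case: (N) => //=; lra.
split => //.
have HKu : K = exp u by rewrite /u exp_ln.
set v := ln u.
have hv := ln_ge hV. rewrite -/v in hv.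
rewrite /V0 in hv.
have hv1' : 1 <= v by apply: Rle_trans (Rmax_l _ _) hv.
have hv2' : 3 * delta * ln 2 / g <= v by apply: Rle_trans (Rmax_r _ _) hv.
have hu1 : ln u <= g / 6 * u by apply: HU1.
have hu2 : ln u <= / 4 * u by apply: HU2.
have hu3 : ln u <= (1 - b) * u by apply: HU3.
have Hv0 : 0 < v by lra.
have Hu0 : 0 < u by lra.
have HH : HN N = u / v by [].
set w := delta * (u / v).
have hwv : w * v = delta * u by rewrite /w; field; lra.
have hw0 : 0 <= w by rewrite /w; apply: Rmult_le_pos; [lra | apply: Rlt_le; apply: Rdiv_lt_0_compat].
have hw4 : w <= u / 4.
  have h14 : delta <= / 4 by lra.
  have := Rmult_le_compat_l w 1 v hw0 hv1'.
  have : delta * u <= / 4 * u by apply: Rmult_le_compat_r; lra.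
  lra.
set m := (Z.to_nat (Int_part (delta * HN N)) + 1)%nat.
have [hm1 hm2] := IP_nat (r := delta * HN N) hw0.
have Hmr : INR m = INR (Z.to_nat (Int_part (delta * HN N))) + 1 by rewrite /m plus_INR.
change (delta * HN N) with w in hm1. change (delta * HN N) with w in hm2. change (delta * HN N) with w in Hmr.
have hmw1 : w < INR m by lra.
have hmw2 : INR m <= w + 1 by lra.
set T := TN N.
have [hT1 hT2] := IP_nat (r := K / u) ltac:(apply: Rlt_le; apply: Rdiv_lt_0_compat; lra).
rewrite -/(TN N) -/T in hT1 hT2.
have hK4 : 4 * u ^ 2 <= K.
  rewrite HKu; apply: exp_ge_of_ln; first nra.
  rewrite ln_mult; [|lra|nra]. rewrite ln_pow //.
  have : ln 4 <= u / 2 by lra.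
  simpl INR; lra.
have HK16 : 16 <= K by simpl pow in hK4; nra.
set x := K / u.
have hxu : K = x * u by rewrite /x; field; lra.
have hTx : INR T <= x by rewrite /x.
have hx4 : 4 * u <= x by apply: (Rmult_le_reg_r u); [lra | rewrite -hxu; simpl pow in hK4; lra].
have hTm : x / 2 <= INR T - INR m by rewrite -/x in hT1 hT2; lra.
have HmT : (m < T)%N by apply/ltP; apply: INR_lt; lra.
have Hm0 : (0 < m)%N by rewrite /m addn1.
have Hm0r : 0 < INR m by apply: lt_0_INR; apply/ltP.
set d := INR T - INR m.
have hd0 : x / 2 <= d by rewrite /d.
have hdT : d <= INR T by rewrite /d; lra.
have HdT : INR (T - m) = d by rewrite minus_INR //; apply/leP; apply: ltnW.
have HC := bin_lbR (ltnW HmT) Hm0. rewrite -/d in HC.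
have HB := bernoulli (T - m) (ltac:(lra) : 1 <= K). rewrite HdT in HB.
have Hq : / (2 * u ^ 2) <= d / (INR m * K).
  have Hmu : INR m <= u by lra.
  have Hp : 0 < 2 * u ^ 2 * (INR m * K).
    apply: Rmult_lt_0_compat; [simpl pow; nra | apply: Rmult_lt_0_compat; lra].
  apply: (Rmult_le_reg_r (2 * u ^ 2 * (INR m * K))) => //.
  have -> : / (2 * u ^ 2) * (2 * u ^ 2 * (INR m * K)) = INR m * K by field; lra.
  have -> : d / (INR m * K) * (2 * u ^ 2 * (INR m * K)) = d * 2 * u ^ 2 by field; lra.
  have h1' : x / 2 * 2 * u ^ 2 <= d * 2 * u ^ 2.
    apply: Rmult_le_compat_r; [simpl pow; nra | rewrite /d; lra].
  have h2' : INR m * K <= u * K by apply: Rmult_le_compat_r; lra.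
  have : x / 2 * 2 * u ^ 2 = u * K by rewrite hxu; simpl pow; field.
  lra.
set L := exp (b * u).
have HML : L <= INR N * INR ('C(T, m) * N.-1 ^ (T - m)) / INR (N ^ T).
  rewrite mult_INR !INR_expn (INR_pred Npos) -/K.
  have E : K ^ T = K ^ m * K ^ (T - m).
    rewrite -pow_add. congr (_ ^ _). symmetry; exact: (subnKC (ltnW HmT)).
  rewrite E.
  set P := (d / INR m) ^ m. set Q := K ^ (T - m). set Rm := K ^ m.
  have hP0 : 0 <= P by apply: pow_le; apply: Rlt_le; apply: Rdiv_lt_0_compat; lra.
  have hQ0 : 0 < Q by apply: pow_lt; lra.
  have hR0 : 0 < Rm by apply: pow_lt; lra.
  have hdK : d / K <= / 2.
    apply: (Rmult_le_reg_r K) => //. rewrite /Rdiv Rmult_assoc Rinv_l; last lra.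
    have : x <= K / 2 by rewrite hxu; nra.
    lra.
  have hB : Q / 2 <= (K - 1) ^ (T - m).
    apply: Rle_trans HB. apply: Rmult_le_compat_l; lra.
  have hC0 : 0 <= INR 'C(T, m) by apply: pos_INR.
  have H1 : K * (P * (Q / 2)) / (Rm * Q) <= K * (INR 'C(T, m) * (K - 1) ^ (T - m)) / (Rm * Q).
    rewrite /Rdiv; apply: Rmult_le_compat_r.
      by apply: Rlt_le; apply: Rinv_0_lt_compat; apply: Rmult_lt_0_compat.
    apply: Rmult_le_compat_l; first lra.
    apply: Rmult_le_compat => //. lra.
  apply: Rle_trans H1.
  have -> : K * (P * (Q / 2)) / (Rm * Q) = K / 2 * (d / (INR m * K)) ^ m.
    have -> : d / (INR m * K) = (d / INR m) * / K by field; lra.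
    rewrite Rpow_mult_distr pow_inv -/P -/Rm.
    field; lra.
  set q := / (2 * u ^ 2).
  have hq0 : 0 < q by apply: Rinv_0_lt_compat; simpl pow; nra.
  have Hq' : q ^ m <= (d / (INR m * K)) ^ m by apply: pow_incr; split; [lra | exact: Hq].
  apply: Rle_trans (Rmult_le_compat_l (K / 2) _ _ ltac:(lra) Hq').
  have hqm : 0 < q ^ m by apply: pow_lt.
  have Hln : ln (K / 2 * q ^ m) = u - ln 2 - INR m * (ln 2 + 2 * v).
    rewrite ln_mult; [|lra|lra]. rewrite /Rdiv ln_mult; [|lra|lra].
    rewrite ln_Rinv; last lra. rewrite ln_pow // /q ln_Rinv; last (simpl pow; nra).
    rewrite ln_mult; [|lra|simpl pow; nra]. rewrite ln_pow // /v /u. simpl INR. ring.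
  rewrite -[K / 2 * q ^ m]exp_ln; last by apply: Rmult_lt_0_compat; lra.
  rewrite Hln; apply: exp_le.
  have e1 : 3 * delta * ln 2 <= g * v.
    have := Rmult_le_compat_l g _ _ (Rlt_le _ _ Hg) hv2'.
    have -> : g * (3 * delta * ln 2 / g) = 3 * delta * ln 2 by field; lra.
    lra.
  have e2 : 3 * ln 2 * w <= g * u.
    have := Rmult_le_compat_l w _ _ hw0 e1.
    have : w * (g * v) = g * (delta * u) by rewrite -hwv; ring.
    move=> h h'. apply: (Rmult_le_reg_l delta); first lra. nra.
  have e3 : 6 * ln 2 <= g * u.
    have := Rmult_le_compat_l g _ _ (Rlt_le _ _ Hg) h5.
    have -> : g * (6 * ln 2 / g) = 6 * ln 2 by field; lra.
    lra.
  have e4 : v <= g / 6 * u by exact: hu1.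
  have ln2p : 0 < ln 2 by have := ln_lt_2; lra.
  have e5 : INR m * (ln 2 + 2 * v) <= (w + 1) * (ln 2 + 2 * v).
    apply: Rmult_le_compat_r; lra.
  have e6 : (w + 1) * (ln 2 + 2 * v) = w * ln 2 + 2 * (delta * u) + ln 2 + 2 * v by rewrite -hwv; ring.
  have e7 : 1 - alpha - 2 * delta = 2 * g by rewrite /g; field.
  rewrite /b. nra.
have HL0 : 0 < L by apply: exp_pos.
have HTp : 0 < INR T by lra.
exists m, (L / (8 * INR T)), (L / 2).
split; first by change (delta * HN N) with w.
split.
  split; first by apply: Rlt_le; apply: Rdiv_lt_0_compat; lra.
  have hLK : L * u <= K.
    rewrite HKu /L.
    have : u <= exp ((1 - b) * u) by apply: exp_ge_of_ln => //.
    move=> h. have := Rmult_le_compat_l (exp (b * u)) _ _ (Rlt_le _ _ (exp_pos _)) h.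
    rewrite -exp_plus. have -> : b * u + (1 - b) * u = u by ring. lra.
  have hL4 : L <= 4 * INR T.
    have : L <= x by apply: (Rmult_le_reg_r u) => //; lra.
    lra.
  apply: (Rmult_le_reg_r (8 * INR T)); first lra.
  have -> : L / (8 * INR T) * (8 * INR T) = L by field; lra.
  lra.
split.
  rewrite /Rpower -/u.
  have : exp (alpha * u) * 2 <= L.
    rewrite /L. have -> : b * u = alpha * u + g * u by rewrite /b; ring.
    rewrite exp_plus. apply: Rmult_le_compat_l; first by apply: Rlt_le; apply: exp_pos.
    apply: exp_ge_of_ln; first lra.
    have := Rmult_le_compat_l g _ _ (Rlt_le _ _ Hg) h7.
    have -> : g * (ln 2 / g) = ln 2 by field; lra.
    lra.
  move=> h; move: HML; rewrite /K => HML; rewrite /K; lra.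
have -> : 2 * (L / (8 * INR T)) ^ 2 * INR T - L / (8 * INR T) * (L / 2) = - (L ^ 2 / (32 * INR T)).
  field; lra.
rewrite exp_Ropp.
apply: Rinv_le_contravar; first by apply: Rmult_lt_0_compat; lra.
rewrite -/K.
have hk128 : 128 <= exp (k * u).
  apply: exp_ge_of_ln; first lra.
  have := Rmult_le_compat_l k _ _ (Rlt_le _ _ Hk) h8.
  have -> : k * (ln 128 / k) = ln 128 by field; lra.
  lra.
have HL2 : L ^ 2 = K * exp (k * u).
  rewrite /L HKu /= Rmult_1_r -!exp_plus; congr exp; rewrite /k; ring.
have H4u : 4 * u <= L ^ 2 / (32 * INR T).
  rewrite HL2.
  apply: (Rmult_le_reg_r (32 * INR T)); first lra.
  have -> : K * exp (k * u) / (32 * INR T) * (32 * INR T) = K * exp (k * u) by field; lra.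
  have : 4 * u * (32 * INR T) <= 4 * u * (32 * x) by apply: Rmult_le_compat_l; lra.
  have : 4 * u * (32 * x) = 128 * K by rewrite hxu; ring.
  have : 128 * K <= K * exp (k * u) by nra.
  lra.
apply: Rle_trans (exp_le H4u).
have -> : exp (4 * u) = K ^ 4 by rewrite HKu exp_pow; congr exp; simpl INR; ring.
simpl pow. have hy : 16 * K <= K * K by nra. have -> : K * (K * (K * (K * 1))) = (K * K) * (K * K) by ring. nra.
Qed.


Lemma up_nat r : 0 < r -> r < INR (Z.to_nat (up r)).
Proof.
move=> Hr. have [h1 h2] := archimed r.
have Hz : (0 <= up r)%Z.
  have : 0 < IZR (up r) by lra.
  move/lt_IZR; lia.
rewrite INR_IZR_INZ Z2Nat.id //.
Qed.

Lemma tele_sum M n : sum_f_R0 (fun k => M / ((INR k + 1) * (INR k + 2))) n = M * (1 - / (INR n + 2)).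
Proof.
have P := pos_INR.
elim: n => [|n IH].
  simpl. field.
rewrite tech5 IH S_INR. have h := P n. field. lra.
Qed.

Lemma tele_cv M : 0 <= M -> infinite_sum (fun k => M / ((INR k + 1) * (INR k + 2))) M.
Proof.
move=> HM e He.
have HMe : 0 <= M / e by apply: Rmult_le_pos => //; apply: Rlt_le; apply: Rinv_0_lt_compat.
exists (Z.to_nat (up (M / e + 1))) => n Hn.
rewrite tele_sum /Rdist.
have Hn' := up_nat (r := M / e + 1) ltac:(lra).
have Hnn : INR (Z.to_nat (up (M / e + 1))) <= INR n by apply: le_INR.
have hP := pos_INR n.
have -> : M * (1 - / (INR n + 2)) - M = - (M / (INR n + 2)) by field; lra.
rewrite Rabs_Ropp Rabs_pos_eq; last by apply: Rmult_le_pos => //; apply: Rlt_le; apply: Rinv_0_lt_compat; lra.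
apply: (Rmult_lt_reg_r (INR n + 2)); first lra.
have -> : M / (INR n + 2) * (INR n + 2) = M by field; lra.
have : M / e < INR n by lra.
move=> h. have := Rmult_lt_compat_l e _ _ He h.
have -> : e * (M / e) = M by field; lra.
nra.
Qed.

Lemma unifP_ge0 (T : finType) (A : {pred T}) : 0 <= unifP A.
Proof.
rewrite /unifP. case: (Req_dec (INR #|T|) 0) => [->|H].
  rewrite /Rdiv Rinv_0 Rmult_0_r; lra.
apply: Rmult_le_pos; first by apply: pos_INR.
apply: Rlt_le; apply: Rinv_0_lt_compat. have := pos_INR #|T|. lra.
Qed.

Theorem lemma5p2 (alpha delta : R) :
  (/ 2 <= alpha < 1)%R ->
  (0 < delta < (1 - alpha) / 2)%R ->
  exists eps : nat -> R,
    (forall N, 0 <= eps N)%R /\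
    (exists l : R, infinite_sum eps l) /\
    (forall N : nat,
       1 - eps N <= unifP (fun w : {ffun 'I_(TN N) -> 'I_N} => good_event alpha delta w))%R.
Proof.
move=> Ha Hd.
have [U [HU0 HU]] := analytic Ha Hd.
set N0 := Z.to_nat (up (exp U)).
have HN0 := up_nat (exp_pos U). rewrite -/N0 in HN0.
set M := (INR N0 + 1) * (INR N0 + 2).
have HM : 1 <= M by have := pos_INR N0; rewrite /M; nra.
exists (fun k => M / ((INR k + 1) * (INR k + 2))).
split.
  move=> k; have := pos_INR k => h.
  apply: Rmult_le_pos; [lra | apply: Rlt_le; apply: Rinv_0_lt_compat; nra].
split; first by exists M; apply: tele_cv; lra.
move=> N.
have hP := pos_INR N.
have Hden : 0 < (INR N + 1) * (INR N + 2) by nra.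
case: (leqP N0 N) => HNN; last first.
  have : INR N + 1 <= INR N0 by rewrite -S_INR; apply: le_INR; apply/leP.
  move=> h.
  have : 1 <= M / ((INR N + 1) * (INR N + 2)).
    apply: (Rmult_le_reg_r ((INR N + 1) * (INR N + 2))) => //.
    rewrite Rmult_1_l /Rdiv Rmult_assoc Rinv_l; last lra.
    rewrite Rmult_1_r /M; nra.
  have := unifP_ge0 (fun w : {ffun 'I_(TN N) -> 'I_N} => good_event alpha delta w).
  lra.
have HuN : U <= ln (INR N).
  apply: ln_ge. apply: Rlt_le; apply: Rlt_le_trans HN0 _. apply: le_INR; apply/leP => //.
have [Npos [m [s [t [Hm [Hs [Hmean Hexp]]]]]]] := HU N HuN.
have Hfin := @final_step N alpha delta s t Npos Hs.
have Havg : INR N * INR ('C(TN N, m) * N.-1 ^ (TN N - m)) / INR (N ^ TN N) <= avg (@cntf N (TN N) (delta * HN N)).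
  rewrite /avg card_ord -INR_expn.
  have hT : 0 < INR (N ^ TN N) by apply: lt_0_INR; apply/ltP; rewrite expn_gt0 Npos.
  rewrite /Rdiv; apply: Rmult_le_compat_r; first by apply: Rlt_le; apply: Rinv_0_lt_compat.
  exact: mean_lb.
have := Hfin ltac:(lra).
have : M / ((INR N + 1) * (INR N + 2)) >= / ((INR N + 1) * (INR N + 2)).
  rewrite /Rdiv. have : 0 < / ((INR N + 1) * (INR N + 2)) by apply: Rinv_0_lt_compat.
  nra.
lra.
Qed.
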